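(* Let $S=(N,M_0)$ be a live H1S system. Then $S$ is reversible if and only if $S$ enables a T-sequence.
   Context: A Petri net is $N=(P,T,W)$ with finite disjoint sets $P$, $T$ and weights $W:(P\times T)\cup(T\times P)\to\mathbb{N}$; incidence matrix $I(p,t)=W(t,p)-W(p,t)$. Transition $t$ is enabled at $M$ if $M(p)\ge W(p,t)$ for all $p$; firing yields $M+I[\cdot,t]$. A system is live if for every transition $t$ and every reachable marking $M'$ some marking reachable from $M'$ enables $t$; it is reversible if $M_0$ is reachable from every marking reachable from $M_0$. A place is shared if it has at least two output transitions; an H1S net is a homogeneous net (for each place, all its output arc weights are equal) with at most one shared place. A T-sequence of $S$ is a firing sequence $\sigma$ feasible from $M_0$ containing every transition of $T$ and such that $I\cdot\mathbf{P}(\sigma)=0$, where $\mathbf{P}(\sigma)$ is its Parikh vector. *)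

(* Defs.v *)
From mathcomp Require Import all_boot all_order all_algebra.
Set Implicit Arguments. Unset Strict Implicit. Unset Printing Implicit Defensive.
Import GRing.Theory Num.Theory.

(* A Petri net N = (P, T, W): P, T finite types, weights split into
   Wpt : P -> T -> nat  (= W(p,t), arcs place -> transition) and
   Wtp : T -> P -> nat  (= W(t,p), arcs transition -> place). *)
Section PetriNet.
Variables (P T : finType) (Wpt : P -> T -> nat) (Wtp : T -> P -> nat).

Definition marking := {ffun P -> nat}.

Definition incidence (p : P) (t : T) : int := (Wtp t p)%:Z - (Wpt p t)%:Z.

Definition enabled (M : marking) (t : T) : bool := [forall p, Wpt p t <= M p].

(* firing t at M (meaningful when t enabled): M + I[.,t] *)
Definition fire (M : marking) (t : T) : marking :=
  [ffun p => M p - Wpt p t + Wtp t p].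

Fixpoint feasible (M : marking) (s : seq T) : bool :=
  if s is t :: s' then enabled M t && feasible (fire M t) s' else true.

Fixpoint fire_seq (M : marking) (s : seq T) : marking :=
  if s is t :: s' then fire_seq (fire M t) s' else M.

Definition reachable (M M' : marking) : Prop :=
  exists s : seq T, feasible M s /\ fire_seq M s = M'.

Definition live (M0 : marking) : Prop :=
  forall (t : T) (M' : marking), reachable M0 M' ->
    exists M'', reachable M' M'' /\ enabled M'' t.

Definition reversible (M0 : marking) : Prop :=
  forall M' : marking, reachable M0 M' -> reachable M' M0.

Definition homogeneous : Prop :=
  forall (p : P) (t t' : T), 0 < Wpt p t -> 0 < Wpt p t' -> Wpt p t = Wpt p t'.

Definition shared (p : P) : bool := 1 < #|[set t : T | 0 < Wpt p t]|.

Definition H1S : Prop :=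
  homogeneous /\ forall p q : P, shared p -> shared q -> p = q.

Definition parikh (s : seq T) (t : T) : nat := count_mem t s.

Definition T_sequence (M0 : marking) (s : seq T) : Prop :=
  [/\ feasible M0 s,
      (forall t : T, t \in s) &
      (forall p : P, (\sum_(t : T) incidence p t * (parikh s t)%:Z)%R = 0%R)].

End PetriNet.

(* Main.v *)
Require Import Defs.
From mathcomp Require Import all_boot all_order all_algebra.
From mathcomp Require Import zify.
Set Implicit Arguments. Unset Strict Implicit. Unset Printing Implicit Defensive.
Import GRing.Theory Num.Theory.

Section Proofs.
Variables (P T : finType) (Wpt : P -> T -> nat) (Wtp : T -> P -> nat).

Local Notation I := (incidence Wpt Wtp).
Local Notation fr := (fire Wpt Wtp).
Local Notation fs := (fire_seq Wpt Wtp).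
Local Notation feas := (feasible Wpt Wtp).
Local Notation en := (enabled Wpt).
Local Notation reach := (reachable Wpt Wtp).

Definition lin (c : T -> nat) (p : P) : int := (\sum_t I p t * (Posz (c t)))%R.
Definition eqM (M0 : marking P) (c : T -> nat) (Q : marking P) :=
  forall p, (Posz (Q p)) = ((Posz (M0 p)) + lin c p)%R.

Lemma feas_cat M s1 s2 : feas M (s1 ++ s2) = feas M s1 && feas (fs M s1) s2.
Proof. by elim: s1 M => [|t s IH] M //=; rewrite IH andbA. Qed.

Lemma fs_cat M s1 s2 : fs M (s1 ++ s2) = fs (fs M s1) s2.
Proof. by elim: s1 M => [|t s IH] M //=. Qed.

Lemma reach_refl M : reach M M.
Proof. by exists [::]. Qed.

Lemma reach_trans M1 M2 M3 : reach M1 M2 -> reach M2 M3 -> reach M1 M3.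
Proof.
move=> [s1 [h1 e1]] [s2 [h2 e2]]; exists (s1 ++ s2).
by rewrite feas_cat fs_cat e1 h1 h2 e2.
Qed.

Lemma reach_fire M t : en M t -> reach M (fr M t).
Proof. by move=> h; exists [:: t] => /=; rewrite h. Qed.

Lemma fire_Z M t p : en M t -> (Posz (fr M t p)) = ((Posz (M p)) + I p t)%R.
Proof.
move/forallP/(_ p) => h; rewrite ffunE /incidence.
lia.
Qed.

Lemma lin_ext c d p : (forall u, c u = d u) -> lin c p = lin d p.
Proof. by move=> h; apply: eq_bigr => u _; rewrite h. Qed.

Lemma lin_add c d p : lin (fun u => c u + d u) p = (lin c p + lin d p)%R.
Proof. by rewrite /lin -big_split /=; apply: eq_bigr => u _; rewrite PoszD mulrDr. Qed.

Lemma lin_add1 t c p : lin (fun u => (t == u) + c u) p = (I p t + lin c p)%R.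
Proof.
rewrite lin_add; congr (_ + _)%R.
rewrite /lin (bigD1 t) //= eqxx mulr1 big1 ?addr0 // => u /negbTE.
by rewrite eq_sym => ->; rewrite mulr0.
Qed.

Lemma state_eq M s : feas M s -> eqM M (parikh s) (fs M s).
Proof.
elim: s M => [|t s IH] M /=.
  by move=> _ p; rewrite /lin big1 ?addr0 // => u _; rewrite mulr0.
move=> /andP[h1 h2] p; rewrite (IH _ h2) fire_Z //.
rewrite (@lin_ext (parikh (t :: s)) (fun u => (t == u) + parikh s u)) ?lin_add1 ?addrA //.
Qed.

Lemma eqM_uniq M0 c Q Q' : eqM M0 c Q -> eqM M0 c Q' -> Q = Q'.
Proof. by move=> h h'; apply/ffunP => p; apply/eqP; rewrite -eqz_nat h h'. Qed.

Lemma eqM_fire M0 c Q t : eqM M0 c Q -> en Q t ->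
  eqM M0 (fun u => (t == u) + c u) (fr Q t).
Proof. by move=> h he p; rewrite fire_Z // h lin_add1; lia. Qed.

Lemma eqM_seq M0 c Q s : eqM M0 c Q -> feas Q s ->
  eqM M0 (fun u => c u + parikh s u) (fs Q s).
Proof. by move=> h hs p; rewrite (state_eq hs) h lin_add addrA. Qed.


Lemma parikh_take_S (y0 : T) (w : seq T) f u : f < size w ->
  parikh (take f.+1 w) u = (nth y0 w f == u) + parikh (take f w) u.
Proof.
move=> hf; rewrite /parikh (take_nth y0 hf) -cats1 count_cat /= addn0 addnC.
by rewrite eq_sym.
Qed.

Lemma parikh_take_le (w : seq T) f u : parikh (take f w) u <= parikh w u.
Proof. by rewrite /parikh -{2}(cat_take_drop f w) count_cat leq_addr. Qed.

Lemma parikh_take_mono (w : seq T) f g u : f <= g ->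
  parikh (take f w) u <= parikh (take g w) u.
Proof.
move=> h; have -> : take f w = take f (take g w) by rewrite take_takel.
exact: parikh_take_le.
Qed.

Lemma unshared_uniq q x y : ~~ shared Wpt q -> 0 < Wpt q x -> 0 < Wpt q y -> x = y.
Proof.
move=> hs hx hy; apply/eqP; apply: contraNT hs => hne.
apply/card_gt1P; exists x, y; by rewrite !inE hx hy.
Qed.

Lemma split_prefix Q s y q : homogeneous Wpt -> feas Q s -> en (fs Q s) y ->
  0 < Wpt q y ->
  exists s1, [/\ feas Q s1, (forall x, x \in s1 -> Wpt q x = 0) &
                 Wpt q y <= fs Q s1 q].
Proof.
move=> hom; elim: s Q => [|x s IH] Q /=.
  move=> _ /forallP/(_ q) h _; exists [::]; split => //.
move=> /andP[hx hs] he hy.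
case: (posnP (Wpt q x)) => hqx.
  have [s1 [h1 h2 h3]] := IH _ hs he hy.
  exists (x :: s1); split => //=; first by rewrite hx.
  by move=> z; rewrite inE => /orP[/eqP ->|/h2].
exists [::]; split => //=.
move/forallP/(_ q): hx; by rewrite (hom q y x hy hqx).
Qed.

Lemma key_lemma (y0 : T) M0 w f c Q q : feas M0 w -> f < size w ->
  (forall u, parikh (take f w) u <= c u) ->
  (forall x, 0 < Wpt q x -> c x <= parikh (take f w) x) ->
  eqM M0 c Q -> Wpt q (nth y0 w f) <= Q q.
Proof.
move=> hw hf hle hq hQ.
set R := fs M0 (take f w).
have : feas M0 (take f w ++ drop f w) by rewrite cat_take_drop.
rewrite feas_cat => /andP[h1]; rewrite (drop_nth y0 hf) /= => /andP[/forallP/(_ q) hR _].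
apply: (leq_trans hR); rewrite -lez_nat.
have hRe := state_eq h1 q; rewrite -/R in hRe.
rewrite hRe hQ lerD2l /lin; apply: ler_sum => u _.
case: (posnP (Wpt q u)) => hu.
  rewrite ler_wpM2l //; first by rewrite /incidence hu subr0.
  by rewrite lez_nat.
have -> : c u = parikh (take f w) u by apply/eqP; rewrite eqn_leq hle hq.
by [].
Qed.


Lemma runA (y0 : T) M0 w : feas M0 w -> forall n f c Q, size w - f = n -> f <= size w ->
  (forall u, parikh (take f w) u <= c u) -> (forall u, c u <= parikh w u) ->
  (forall q x, shared Wpt q -> 0 < Wpt q x -> c x <= parikh (take f w) x) ->
  eqM M0 c Q -> reach Q (fs M0 w).
Proof.
move=> hw; elim=> [|n IH] f c Q hn hf hle hge hsh hQ.
  have ef : f = size w by lia.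
  rewrite ef take_size in hle.
  have hc : forall u, c u = parikh w u by move=> u; apply/eqP; rewrite eqn_leq hle hge.
  have hQ' : eqM M0 (parikh w) Q by move=> p; rewrite hQ (lin_ext _ hc).
  rewrite (eqM_uniq hQ' (state_eq hw)); exact: reach_refl.
have hf' : f < size w by lia.
set y := nth y0 w f.
case: (ltnP (parikh (take f w) y) (c y)) => hy.
  apply: (IH f.+1 c Q) => //; try lia.
    move=> u; rewrite (parikh_take_S y0 _ hf') -/y; case: eqP => [<-|_] //=.
    by rewrite add0n.
  move=> q x hq hx; apply: leq_trans (hsh _ _ hq hx) _; exact: parikh_take_mono.
have ecy : c y = parikh (take f w) y by apply/eqP; rewrite eqn_leq hy hle.
have hen : en Q y.
  apply/forallP => q; case: (posnP (Wpt q y)) => hqy; first by rewrite hqy.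
  apply: (key_lemma y0 hw hf' hle _ hQ) => x hx.
  case: (boolP (shared Wpt q)) => hs; first exact: hsh hs hx.
  by rewrite (unshared_uniq hs hx hqy) ecy.
apply: reach_trans (reach_fire hen) _.
apply: (IH f.+1 (fun u => (y == u) + c u)) => //; try lia; last exact: eqM_fire.
- move=> u; rewrite (parikh_take_S y0 _ hf') -/y; case: eqP => [<-|_] /=.
    by rewrite ecy.
  exact: hle.
- move=> u; case: eqP => [<-|_] /=; last exact: hge.
  rewrite ecy; have := parikh_take_le w f.+1 y; rewrite (parikh_take_S y0 _ hf') -/y eqxx; lia.
- move=> q x hq hx; rewrite (parikh_take_S y0 _ hf') -/y; case: eqP => [<-|_] /=.
    by rewrite ecy.
  exact: hsh hq hx.
Qed.


Lemma runB (y0 : T) M0 w : H1S Wpt -> live Wpt Wtp M0 -> feas M0 w ->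
  forall n f c Q, size w - f = n -> f <= size w -> reach M0 Q ->
  (forall u, parikh (take f w) u <= c u) ->
  (forall q x, shared Wpt q -> 0 < Wpt q x -> c x <= parikh w x) ->
  eqM M0 c Q ->
  exists c' Q', [/\ reach M0 Q', reach Q Q', eqM M0 c' Q',
     (forall u, parikh w u <= c' u) &
     (forall q x, shared Wpt q -> 0 < Wpt q x -> c' x <= parikh w x)].
Proof.
move=> [hom huniq] hlive hw; elim=> [|n IH] f c Q hn hf hR hle hsh hQ.
  have ef : f = size w by lia.
  rewrite ef take_size in hle.
  by exists c, Q; split => //; exact: reach_refl.
have hf' : f < size w by lia.
set y := nth y0 w f.
case: (ltnP (parikh (take f w) y) (c y)) => hy.
  apply: (IH f.+1 c Q) => //; try lia.
  move=> u; rewrite (parikh_take_S y0 _ hf') -/y; case: eqP => [<-|_] //=.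
  by rewrite add0n.
have ecy : c y = parikh (take f w) y by apply/eqP; rewrite eqn_leq hy hle.
have step : forall c1 Q1, reach M0 Q1 -> reach Q Q1 -> eqM M0 c1 Q1 ->
    (forall u, parikh (take f w) u <= c1 u) -> c1 y = parikh (take f w) y ->
    (forall q x, shared Wpt q -> 0 < Wpt q x -> c1 x <= parikh w x) ->
    en Q1 y ->
    exists c' Q', [/\ reach M0 Q', reach Q Q', eqM M0 c' Q',
     (forall u, parikh w u <= c' u) &
     (forall q x, shared Wpt q -> 0 < Wpt q x -> c' x <= parikh w x)].
  move=> c1 Q1 hR1 hQQ1 hQ1 hle1 ecy1 hsh1 hen.
  have hA : forall u, parikh (take f.+1 w) u <= (y == u) + c1 u.
    move=> u; rewrite (parikh_take_S y0 _ hf') -/y; case: eqP => [<-|_] /=.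
      by rewrite ecy1.
    exact: hle1.
  have hB : forall q x, shared Wpt q -> 0 < Wpt q x -> (y == x) + c1 x <= parikh w x.
    move=> q x hq hx; case: eqP => [<-|_] /=; last exact: hsh1 hq hx.
    rewrite ecy1; have := parikh_take_le w f.+1 y.
    rewrite (parikh_take_S y0 _ hf') -/y eqxx; lia.
  have [c' [Q' [h1 h2 h3 h4 h5]]] :=
    IH f.+1 (fun u => (y == u) + c1 u) (fr Q1 y) ltac:(lia) hf'
      (reach_trans hR1 (reach_fire hen)) hA hB (eqM_fire hQ1 hen).
  exists c', Q'; split => //.
  exact: reach_trans hQQ1 (reach_trans (reach_fire hen) h2).
case: (boolP (en Q y)) => hen.
  by apply: (step c Q) => //; exact: reach_refl.
move: hen => /forallPn [q hq]; rewrite -ltnNge in hq.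
have hqy : 0 < Wpt q y by lia.
have hsq : shared Wpt q.
  apply/negPn/negP => hns.
  have : Wpt q y <= Q q.
    apply: (key_lemma y0 hw hf' hle _ hQ) => x hx.
    by rewrite (unshared_uniq hns hx hqy) ecy.
  lia.
have [M'' [[s [hs es]] he]] := hlive y Q hR.
rewrite -es in he.
have [s1 [hs1 h0 hge]] := split_prefix hom hs he hqy.
have hy1 : parikh s1 y = 0.
  by apply/count_memPn; apply/negP => /h0; lia.
have hx1 : forall q' x, shared Wpt q' -> 0 < Wpt q' x -> parikh s1 x = 0.
  move=> q' x hq' hx; have eq' := huniq _ _ hq' hsq; subst q'.
  by apply/count_memPn/negP => /h0; lia.
have hRs : reach Q (fs Q s1) by exists s1.
have hQs := eqM_seq hQ hs1.
apply: (step (fun u => c u + parikh s1 u) (fs Q s1)) => //.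
- exact: reach_trans hR hRs.
- by move=> u; apply: leq_trans (hle u) (leq_addr _ _).
- by rewrite hy1 addn0 ecy.
- by move=> q' x hq' hx; rewrite (hx1 _ _ hq' hx) addn0; exact: hsh hq' hx.
- apply/forallP => q'; case: (posnP (Wpt q' y)) => hq'y; first by rewrite hq'y.
  case: (boolP (shared Wpt q')) => hs'.
    by rewrite (huniq _ _ hs' hsq).
  apply: (key_lemma y0 hw hf' _ _ hQs).
    by move=> u; apply: leq_trans (hle u) (leq_addr _ _).
  move=> x hx; rewrite (unshared_uniq hs' hx hq'y) hy1 addn0 ecy //.
Qed.


Fixpoint rep (s : seq T) K := if K is K'.+1 then s ++ rep s K' else [::].

Lemma rep_add s a b : rep s (a + b) = rep s a ++ rep s b.
Proof. by elim: a => //= a IH; rewrite IH catA. Qed.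

Lemma parikh_rep s K u : parikh (rep s K) u = K * parikh s u.
Proof. by elim: K => //= K IH; rewrite /parikh count_cat; rewrite /parikh in IH; rewrite IH mulSn. Qed.

Lemma rep_cycle M s K : feas M s -> fs M s = M -> feas M (rep s K) /\ fs M (rep s K) = M.
Proof.
move=> hs e; elim: K => [|K [IH1 IH2]] //=.
by rewrite feas_cat fs_cat e hs IH1 IH2.
Qed.

Lemma cycle_all M (ts : seq T) : live Wpt Wtp M -> reversible Wpt Wtp M ->
  exists s, [/\ feas M s, fs M s = M & forall t, t \in ts -> t \in s].
Proof.
move=> hlive hrev; elim: ts => [|t ts [s [h1 h2 h3]]].
  by exists [::].
have [M'' [[a [ha ea]] he]] := hlive t M (reach_refl M).
have hr : reach M (fr M'' t).
  apply: reach_trans (reach_fire he); by exists a.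
have [b [hb eb]] := hrev _ hr.
exists (s ++ a ++ t :: b); split.
- rewrite feas_cat h1 h2 feas_cat ha ea /= he; by rewrite hb.
- by rewrite fs_cat h2 fs_cat ea /= eb.
- move=> t0; rewrite inE => /orP[/eqP ->|/h3 h].
    by rewrite !mem_cat inE eqxx !orbT.
  by rewrite mem_cat h.
Qed.

End Proofs.

Theorem mainTheorem9 (P T : finType) (Wpt : P -> T -> nat) (Wtp : T -> P -> nat)
  (M0 : marking P) :
  H1S Wpt -> live Wpt Wtp M0 ->
  (reversible Wpt Wtp M0 <-> exists s : seq T, T_sequence Wpt Wtp M0 s).
Proof.
move=> hH hlive; split.
  move=> hrev; have [s [h1 h2 h3]] := cycle_all (enum T) hlive hrev.
  exists s; split => //.
    by move=> t; apply: h3; rewrite mem_enum.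
  move=> p; have := state_eq h1 p; rewrite h2 => e.
  apply/eqP; move: e; rewrite /lin; lia.
move=> [sg [hsg hall hsum]] M' [tau [htau etau]].
have hcyc : fire_seq Wpt Wtp M0 sg = M0.
  apply: (eqM_uniq (state_eq hsg)) => p; rewrite /lin.
  by rewrite (hsum p) addr0.
case: tau htau etau => [|y0 tau'] htau etau.
  by rewrite -etau; exists [::].
set tau := y0 :: tau' in htau etau.
have hpos : forall u, 0 < parikh sg u.
  move=> u; rewrite lt0n; apply/negP => /eqP/count_memPn; by rewrite hall.
set K0 := size tau.
have [hw1 ew1] := rep_cycle K0 hsg hcyc.
have hQ : eqM Wpt Wtp M0 (parikh tau) M' by rewrite -etau; exact: state_eq.
have hR : reachable Wpt Wtp M0 M' by exists tau.
have h0 : forall u, parikh (take 0 (rep sg K0)) u <= parikh tau u.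
  by move=> u; rewrite take0.
have hK : forall x, size tau <= parikh (rep sg K0) x.
  by move=> x; rewrite parikh_rep; apply: leq_pmulr; exact: hpos.
have [c' [Q' [hR' hMQ' hQ' hge' hsh']]] :=
  runB y0 hH hlive hw1 (erefl (size (rep sg K0) - 0)) (leq0n _) hR
    h0
    (fun q x _ _ => leq_trans (count_size _ _) (hK x)) hQ.
set S := (\sum_(u : T) c' u)%N.
have [hw2 ew2] := rep_cycle (K0 + S) hsg hcyc.
have ht : take (size (rep sg K0)) (rep sg (K0 + S)) = rep sg K0.
  by rewrite rep_add take_size_cat.
have := runA y0 hw2 (erefl _) (f:=size (rep sg K0)) (c:=c') _ _ _ _ hQ'.
rewrite ht ew2 => H.
apply: reach_trans hMQ' (H _ _ _ _).
- by rewrite rep_add size_cat leq_addr.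
- exact: hge'.
- move=> u; rewrite parikh_rep.
  apply: leq_trans (leq_pmulr _ (hpos u)).
  apply: leq_trans (leq_addl K0 _).
  by rewrite /S (bigD1 u) //= leq_addr.
- exact: hsh'.
Qed.
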